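(* Let $(\mathcal{P},d)$ be a tree metric given by the weighted tree $T$, and let $\alpha>0$. In the greedy-routing network creation game on $(\mathcal{P},d)$ with edge price $\alpha$, the profile $\mathbf{s}^T$ (every agent $u$ builds edges exactly to its neighbours in $T$) is the unique Greedy Equilibrium. Consequently it is also the unique Nash equilibrium.
   Context: A tree metric on a finite set $\mathcal{P}$ is given by a spanning tree $T$ on $\mathcal{P}$ with positive edge weights, $d(x,y)=d_T(x,y)$ being the weight of the unique $x$–$y$ path in $T$. Game: agents are the points of $\mathcal{P}$; agent $u$'s strategy is $S_u\subseteq\mathcal{P}\setminus\{u\}$; a profile $\mathbf{s}$ defines the directed network with arcs $(u,v)$, $v\in S_u$, of length $d(u,v)$. A greedy path from $u$ to $v$ is a directed path $u=x_1,\dots,x_j=v$ of arcs with $d(x_i,v)>d(x_{i+1},v)$ for all $i$. $\mathrm{stretch}(u,v)$ is the minimum length of a greedy path from $u$ to $v$ divided by $d(u,v)$, or a fixed sufficiently large penalty constant $Z$ if none exists. Cost: $c_u(\mathbf{s})=\sum_{v\ne u}\mathrm{stretch}(u,v)+\alpha|S_u|$. A Greedy Equilibrium is a profile in which no agent can strictly decrease its cost by adding one element to, deleting one element from, or swapping one element of its strategy (others fixed). A Nash equilibrium is a profile in which no agent can strictly decrease its cost by any change of its own strategy; every Nash equilibrium is a Greedy Equilibrium. *)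

(* Defs.v *)
From HB Require Import structures.
From mathcomp Require Import all_boot all_order all_algebra.
Set Implicit Arguments. Unset Strict Implicit. Unset Printing Implicit Defensive.
Import Order.TTheory GRing.Theory Num.Theory.
Local Open Scope ring_scope.

Section Defs.
Variables (R : realFieldType) (P : finType).

Definition simple_path (E : rel P) (x y : P) (p : seq P) : bool :=
  [&& path E x p, last x p == y & uniq (x :: p)].

Definition is_tree (E : rel P) : Prop :=
  irreflexive E /\ symmetric E /\
  forall x y : P, exists! p : seq P, simple_path E x y p.

Definition walk_length (f : P -> P -> R) (x : P) (p : seq P) : R :=
  \sum_(e <- zip (x :: p) p) f e.1 e.2.

Definition is_tree_metric (E : rel P) (w : P -> P -> R) (d : P -> P -> R) : Prop :=
  is_tree E /\
  (forall x y, E x y -> 0 < w x y) /\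
  (forall x y, E x y -> w x y = w y x) /\
  (forall x y p, simple_path E x y p -> d x y = walk_length w x p).

Definition profile := P -> {set P}.

Definition valid_profile (s : profile) : Prop := forall u, u \notin s u.

Definition tree_profile (E : rel P) : profile := fun u => [set v | E u v].

Definition greedy_arc (d : P -> P -> R) (s : profile) (v : P) : rel P :=
  fun x y => (y \in s x) && (d y v < d x v).

Definition greedy_path (d : P -> P -> R) (s : profile) (u v : P) (p : seq P) : bool :=
  path (greedy_arc d s v) u p && (last u p == v).

(* All sequences over P of length at most #|P|.  Every greedy path visits
   pairwise distinct vertices (distance to v strictly decreases), so every
   greedy path u :: p has p among these. *)
Definition short_seqs : seq (seq P) :=
  flatten [seq [seq tval t | t : k.-tuple P] | k <- iota 0 #|P|.+1].

Definition seq_min (s : seq R) : option R :=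
  foldr (fun x acc => Some (match acc with None => x | Some y => Num.min x y end))
        None s.

Definition stretch (d : P -> P -> R) (Z : R) (s : profile) (u v : P) : R :=
  match seq_min [seq walk_length d u p | p <- short_seqs & greedy_path d s u v p] with
  | Some m => m / d u v
  | None => Z
  end.

Definition cost (d : P -> P -> R) (Z alpha : R) (s : profile) (u : P) : R :=
  \sum_(v | v != u) stretch d Z s u v + alpha * #|s u|%:R.

Definition deviate (s : profile) (u : P) (S : {set P}) : profile :=
  fun x => if x == u then S else s x.

Definition greedy_move (u : P) (S S' : {set P}) : Prop :=
  (exists v, [/\ v \notin S, v != u & S' = v |: S]) \/
  (exists v, v \in S /\ S' = S :\ v) \/
  (exists x y, [/\ x \in S, y \notin S, y != u & S' = y |: (S :\ x)]).

Definition greedy_equilibrium (d : P -> P -> R) (Z alpha : R) (s : profile) : Prop :=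
  forall u S', greedy_move u (s u) S' ->
    ~ (cost d Z alpha (deviate s u S') u < cost d Z alpha s u).

Definition nash_equilibrium (d : P -> P -> R) (Z alpha : R) (s : profile) : Prop :=
  forall u (S' : {set P}), u \notin S' ->
    ~ (cost d Z alpha (deviate s u S') u < cost d Z alpha s u).

End Defs.

(* Main.v *)
Require Import Defs.
From HB Require Import structures.
From mathcomp Require Import all_boot all_order all_algebra.
From mathcomp Require Import lra zify ring.
Set Implicit Arguments. Unset Strict Implicit. Unset Printing Implicit Defensive.
Import Order.TTheory GRing.Theory Num.Theory.
Local Open Scope ring_scope.

Ltac rlra := repeat match goal with
  | H : is_true (_ != _) |- _ => clear H
  | H : is_true (_ == _) |- _ => clear H
  | H : @eq (Equality.sort _) _ _ |- _ => clear H
  end; lra.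

Section Walk.
Variables (R : realFieldType) (P : finType).
Implicit Types (f : P -> P -> R) (x y : P) (p q : seq P).

Lemma wl_nil f x : walk_length f x [::] = 0.
Proof. by rewrite /walk_length big_nil. Qed.

Lemma wl_cons f x y p : walk_length f x (y :: p) = f x y + walk_length f y p.
Proof. by rewrite /walk_length /= big_cons. Qed.

Lemma wl_cat f x p q :
  walk_length f x (p ++ q) = walk_length f x p + walk_length f (last x p) q.
Proof.
elim: p x => [|y p IH] x /=; first by rewrite wl_nil add0r.
by rewrite !wl_cons IH addrA.
Qed.

Lemma wl_rcons f x p y :
  walk_length f x (rcons p y) = walk_length f x p + f (last x p) y.
Proof. by rewrite -cats1 wl_cat wl_cons wl_nil addr0. Qed.

Lemma last_rev_belast x p : last (last x p) (rev (belast x p)) = x.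
Proof.
have e: last x p :: rev (belast x p) = rev (x :: p) by rewrite [x :: p]lastI rev_rcons.
have ->: last (last x p) (rev (belast x p)) = last x (last x p :: rev (belast x p)) by [].
by rewrite e rev_cons last_rcons.
Qed.

Lemma mem_rev_belast x p z : (z \in last x p :: rev (belast x p)) = (z \in x :: p).
Proof. by rewrite -rev_rcons -[rcons _ _]lastI mem_rev. Qed.

Lemma uniq_rev_belast x p : uniq (last x p :: rev (belast x p)) = uniq (x :: p).
Proof. by rewrite -rev_rcons -[rcons _ _]lastI rev_uniq. Qed.

Lemma wl_rev (E : rel P) f x p : path E x p -> (forall a b, E a b -> f a b = f b a) ->
  walk_length f (last x p) (rev (belast x p)) = walk_length f x p.
Proof.
move=> + fs; elim: p x => [|y p IH] x /=; first by [].
move=> /andP[Exy Hp].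
by rewrite rev_cons wl_rcons IH // last_rev_belast wl_cons addrC (fs _ _ Exy).
Qed.

Lemma wl_ge0 (E : rel P) f x p : (forall a b, E a b -> 0 < f a b) -> path E x p ->
  0 <= walk_length f x p.
Proof.
move=> fp; elim: p x => [|y p IH] x /=; first by rewrite wl_nil.
by case/andP=> Exy Hp; rewrite wl_cons addr_ge0 ?IH // ltW ?fp.
Qed.

End Walk.
Section SeqMin.
Variable R : realFieldType.

Lemma sm_none (l : seq R) : seq_min l = None -> l = [::].
Proof. by case: l. Qed.

Lemma sm_mem (l : seq R) m : seq_min l = Some m -> m \in l.
Proof.
elim: l m => [|x l IH] m //= [<-]; case e: (seq_min l) => [y|].
  rewrite inE; case: (leP x y) => _; first by rewrite eqxx.
  by rewrite (IH _ e) orbT.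
by rewrite inE eqxx.
Qed.

Lemma sm_le (l : seq R) m : seq_min l = Some m -> forall x, x \in l -> m <= x.
Proof.
elim: l m => [|x l IH] m //= [<-] z; case e: (seq_min l) => [y|].
  rewrite inE => /orP[/eqP ->|zl]; first by rewrite ge_min lexx.
  by rewrite ge_min (IH _ e) ?orbT.
by rewrite (sm_none e) inE => /eqP ->.
Qed.

End SeqMin.
Section Tree.
Variables (R : realFieldType) (P : finType) (E : rel P) (w d : P -> P -> R).
Hypotheses (Eirr : irreflexive E) (Esym : symmetric E)
  (Euniq : forall x y : P, exists! p : seq P, simple_path E x y p)
  (wpos : forall x y, E x y -> 0 < w x y)
  (wsym : forall x y, E x y -> w x y = w y x)
  (dpath : forall x y p, simple_path E x y p -> d x y = walk_length w x p).

Lemma ex_sp x y : exists p, simple_path E x y p.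
Proof. by case: (Euniq x y) => p [Hp _]; exists p. Qed.

Definition tp x y := xchoose (ex_sp x y).

Lemma tpP x y : simple_path E x y (tp x y).
Proof. exact: xchooseP. Qed.

Lemma sp_tp x y p : simple_path E x y p -> p = tp x y.
Proof.
move=> Hp; case: (Euniq x y) => q [_ Hq].
by rewrite -(Hq _ Hp) -(Hq _ (tpP x y)).
Qed.

Lemma sp_nil x : simple_path E x x [::].
Proof. by rewrite /simple_path /= eqxx. Qed.

Lemma sp_edge x y : E x y -> simple_path E x y [:: y].
Proof.
move=> Exy; rewrite /simple_path /= Exy eqxx /= inE andbT.
by apply/eqP=> exy; move: Exy; rewrite exy Eirr.
Qed.

Lemma d_xx x : d x x = 0.
Proof. by rewrite (dpath (sp_nil x)) wl_nil. Qed.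

Lemma d_edge x y : E x y -> d x y = w x y.
Proof. by move=> Exy; rewrite (dpath (sp_edge Exy)) wl_cons wl_nil addr0. Qed.

Lemma sp_split x y p1 z p2 : simple_path E x y (p1 ++ z :: p2) ->
  simple_path E x z (rcons p1 z) /\ simple_path E z y p2.
Proof.
case/and3P=> Hp Hl Hu.
move: Hp; rewrite cat_path /= => /and3P[H1 H2 H3].
move: Hu; rewrite -cat_cons cat_uniq => /and3P[U1 U2 U3].
split.
  rewrite /simple_path rcons_path H1 H2 last_rcons eqxx /=.
  have ->: (x \notin rcons p1 z) && uniq (rcons p1 z) = uniq ((x :: p1) ++ [:: z]) by rewrite cats1.
  rewrite cat_uniq U1 /= andbT orbF.
  by apply: contra U2 => zin; rewrite /= zin.
by move: Hl; rewrite last_cat /= => Hl; rewrite /simple_path H3 Hl U3.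
Qed.

Lemma d_split x y p1 z p2 : simple_path E x y (p1 ++ z :: p2) ->
  d x y = d x z + d z y.
Proof.
move=> Hp; case: (sp_split Hp) => H1 H2.
by rewrite (dpath Hp) (dpath H1) (dpath H2) wl_cat wl_cons wl_rcons addrA.
Qed.

Lemma d_ge0 x y : 0 <= d x y.
Proof. by rewrite (dpath (tpP x y)); apply: (wl_ge0 wpos); case/andP: (tpP x y). Qed.

Lemma d_pos x y : x != y -> 0 < d x y.
Proof.
move=> nxy; have := tpP x y; rewrite (dpath (tpP x y)).
case: (tp x y) => [|a q]; first by case/and3P=> _ /eqP /= exy; rewrite exy eqxx in nxy.
case/and3P=> /= /andP[Exa Hq] _ _; rewrite wl_cons.
by rewrite ltr_wpDr ?wpos // (wl_ge0 wpos).
Qed.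

Lemma sp_rev x y p : simple_path E x y p -> simple_path E y x (rev (belast x p)).
Proof.
case/and3P=> Hp /eqP Hl Hu; rewrite -Hl /simple_path last_rev_belast eqxx.
rewrite uniq_rev_belast Hu andbT rev_path.
rewrite andbT; by apply: (sub_path _ Hp) => a b /=; rewrite Esym.
Qed.

Lemma d_sym x y : d y x = d x y.
Proof.
have H := tpP x y; rewrite (dpath H) (dpath (sp_rev H)).
case/and3P: H => Hp /eqP Hl _.
by have := wl_rev Hp wsym; rewrite Hl.
Qed.

Lemma tri_step x x1 y : E x x1 -> d x y <= w x x1 + d x1 y.
Proof.
move=> Ex; have H := tpP x1 y; case: (boolP (x \in x1 :: tp x1 y)) => xin.
  have nx: x != x1 by apply/eqP=> e; move: Ex; rewrite e Eirr.
  move: xin H; rewrite inE (negPf nx) /= => /splitPr [q1 q2] H'.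
  case: (sp_split H') => H1 H2.
  rewrite (d_split H'); have := d_ge0 x1 x; have := wpos Ex; lra.
have Hs : simple_path E x y (x1 :: tp x1 y).
  case/and3P: H => Hp Hl Hu; rewrite /simple_path /= Ex Hp Hl /=.
  by move: Hu; rewrite /= => ->; rewrite andbT; move: xin.
by rewrite (dpath Hs) wl_cons -(dpath H).
Qed.

Lemma tri_walk x p : path E x p -> d x (last x p) <= walk_length w x p.
Proof.
elim: p x => [|y p IH] x /=; first by rewrite d_xx wl_nil.
case/andP=> Exy Hp; rewrite wl_cons.
by apply: le_trans (tri_step _ Exy) _; rewrite lerD2l IH.
Qed.

Lemma tri x y z : d x z <= d x y + d y z.
Proof.
have H1 := tpP x y; have H2 := tpP y z.
case/and3P: H1 => P1 /eqP L1 _; case/and3P: H2 => P2 /eqP L2 _.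
have Hp : path E x (tp x y ++ tp y z) by rewrite cat_path P1 L1 P2.
have := tri_walk Hp; rewrite last_cat L1 L2 wl_cat L1.
by rewrite -(dpath (tpP x y)) -(dpath (tpP y z)).
Qed.

Definition nx u v := head u (tp u v).

Lemma tp_cons u v : u != v -> exists q, tp u v = nx u v :: q.
Proof.
rewrite /nx; case e: (tp u v) => [|a q] nuv; last by exists q.
by have := tpP u v; rewrite e => /and3P[_ /eqP /= euv _]; rewrite euv eqxx in nuv.
Qed.

Lemma N1 u v : u != v -> E u (nx u v).
Proof.
move=> nuv; case: (tp_cons nuv) => q e.
by have := tpP u v; rewrite e => /and3P[/= /andP[]].
Qed.

Lemma N4 u x : E u x -> nx u x = x.
Proof. by move=> Ex; rewrite /nx -(sp_tp (sp_edge Ex)). Qed.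

Lemma N2 u v : u != v -> d u v = d u (nx u v) + d (nx u v) v.
Proof.
move=> nuv; case: (tp_cons nuv) => q e.
have := tpP u v; rewrite e -[_ :: q]cat0s => H; exact: (d_split H).
Qed.

Lemma head_cat (a z : P) q r : head a (q ++ z :: r) = head z q.
Proof. by case: q. Qed.

Lemma sp_disj a b1 b2 p1 p2 : simple_path E a b1 p1 -> simple_path E a b2 p2 ->
  head a p1 != head a p2 -> forall z, z \in p1 -> z \notin p2.
Proof.
move=> H1 H2 nh z zp1; apply/negP=> zp2.
move: H1 H2 nh; case/splitPr: zp1 => q1 r1; case/splitPr: zp2 => q2 r2.
rewrite !head_cat => H1 H2.
case: (sp_split H1) => S1 _; case: (sp_split H2) => S2 _.
have e: rcons q1 z = rcons q2 z by rewrite (sp_tp S1) (sp_tp S2).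
by case: (rcons_inj e) => ->; rewrite eqxx.
Qed.

Lemma N3 u y v : y != u -> v != u -> nx u y != nx u v -> d y v = d y u + d u v.
Proof.
move=> nyu nvu nh.
have Hy := tpP u y; have Hv := tpP u v.
have Ry := sp_rev Hy.
have ly : last u (tp u y) = y by case/and3P: Hy => _ /eqP.
have Hs : simple_path E y v (rev (belast u (tp u y)) ++ tp u v).
  case/and3P: (Ry) => Pr /eqP Lr Ur; case/and3P: (Hv) => Pv Lv Uv.
  rewrite /simple_path cat_path Pr Lr Pv last_cat Lr Lv /=.
  have ->: (y \notin rev (belast u (tp u y)) ++ tp u v) &&
    uniq (rev (belast u (tp u y)) ++ tp u v) = uniq ((y :: rev (belast u (tp u y))) ++ tp u v) by [].
  rewrite cat_uniq Ur /=; move: Uv => /= /andP[uv ->]; rewrite andbT.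
  apply/hasPn => z zv; have := mem_rev_belast u (tp u y) z; rewrite ly => ->; rewrite inE.
  apply/negP => /orP[/eqP ezu|zy]; first by rewrite ezu in zv; rewrite zv in uv.
  by move: (sp_disj Hy Hv nh zy); rewrite zv.
rewrite (dpath Hs) wl_cat (dpath Ry) (dpath Hv).
by case/and3P: Ry => _ /eqP ->.
Qed.


Lemma tri_walk_d x p : d x (last x p) <= walk_length d x p.
Proof.
elim: p x => [|y p IH] x /=; first by rewrite d_xx wl_nil.
by rewrite wl_cons; apply: le_trans (tri x y _) _; rewrite lerD2l IH.
Qed.

Section Stretch.
Variables (Z : R) (s : profile P).

Lemma gp_len u v p : greedy_path d s u v p -> d u v <= walk_length d u p.
Proof. by case/andP=> _ /eqP <-; exact: tri_walk_d. Qed.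

Lemma gp_uniq u v p : greedy_path d s u v p -> uniq (u :: p).
Proof.
case/andP=> Hp _.
apply: (@sorted_uniq _ (fun a b => d b v < d a v)).
- by move=> a b c /= h1 h2; apply: lt_trans h1.
- by move=> a /=; rewrite ltxx.
by apply: sub_path Hp => a b /andP[].
Qed.

Lemma gp_short u v p : greedy_path d s u v p -> p \in short_seqs P.
Proof.
move=> H; have U := gp_uniq H.
have Hs : (size p < #|P|.+1)%N.
  have: (#|u :: p| <= #|P|)%N by apply: max_card.
  by rewrite (card_uniqP U) /= => /ltnW.
rewrite /short_seqs; apply/flattenP.
exists [seq tval t | t : (size p).-tuple P].
  by apply/mapP; exists (size p); rewrite // mem_iota add0n.
by apply/mapP; exists (in_tuple p); rewrite ?mem_enum.
Qed.

Lemma gp_cons u v y p : greedy_path d s u v (y :: p) ->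
  [/\ y \in s u, d y v < d u v & greedy_path d s y v p].
Proof. by case/andP=> /= /andP[/andP[H1 H2] H3] H4; split=> //; apply/andP. Qed.

Lemma stretch_ge1 u v : 1 <= Z -> u != v -> 1 <= stretch d Z s u v.
Proof.
move=> Z1 nuv; rewrite /stretch; case e: (seq_min _) => [m|] //.
have := sm_mem e => /mapP [p]; rewrite mem_filter => /andP[gp _] ->.
by rewrite ler_pdivlMr ?d_pos // mul1r gp_len.
Qed.

Lemma stretch_le u v p : greedy_path d s u v p ->
  stretch d Z s u v <= walk_length d u p / d u v.
Proof.
move=> gp; have dpos : 0 <= d u v by exact: d_ge0.
rewrite /stretch; case e: (seq_min _) => [m|].
  rewrite ler_wpM2r ?invr_ge0 //; apply: (sm_le e); apply/mapP; exists p => //.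
  by rewrite mem_filter gp (gp_short gp).
have pin : p \in [seq q <- short_seqs P | greedy_path d s u v q].
  by rewrite mem_filter gp (gp_short gp).
by have := map_f (fun q => walk_length d u q) pin; rewrite (sm_none e).
Qed.

Lemma stretch_gt1 u v : 1 < Z -> u != v ->
  (forall p, greedy_path d s u v p -> d u v < walk_length d u p) ->
  1 < stretch d Z s u v.
Proof.
move=> Z1 nuv H; rewrite /stretch; case e: (seq_min _) => [m|] //.
have := sm_mem e => /mapP [p]; rewrite mem_filter => /andP[gp _] ->.
by rewrite ltr_pdivlMr ?d_pos // mul1r H.
Qed.

Lemma stretch_Z u v : (forall p, ~~ greedy_path d s u v p) -> stretch d Z s u v = Z.
Proof.
move=> H; rewrite /stretch.
suff ->: [seq p <- short_seqs P | greedy_path d s u v p] = [::] by [].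
apply/eqP; apply/negPn; rewrite -has_filter; apply/hasP; case=> p _.
by rewrite (negPf (H p)).
Qed.

End Stretch.

Lemma stretch_eq Z (s s' : profile P) u v :
  (forall p, greedy_path d s u v p = greedy_path d s' u v p) ->
  stretch d Z s u v = stretch d Z s' u v.
Proof. by move=> H; rewrite /stretch (eq_filter H). Qed.

(* deviation by u only changes the arcs out of u *)
Lemma gp_dev (s : profile P) u (S : {set P}) v p :
  (forall y, d y v < d u v -> (y \in S) = (y \in s u)) ->
  greedy_path d (deviate s u S) u v p = greedy_path d s u v p.
Proof.
move=> HS; case: p => [|y p] //.
have path_dev : forall y p, d y v < d u v ->
  path (greedy_arc d (deviate s u S) v) y p = path (greedy_arc d s v) y p.
  move=> {}y {}p; elim: p y => [|z p IH] y //= yv.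
  have yu : (y == u) = false by apply/negbTE; apply/eqP=> e; rewrite e ltxx in yv.
  rewrite /greedy_arc /deviate yu; case: (ltP (d z v) (d y v)) => zy.
    by rewrite !andbT IH // (lt_trans zy).
  by rewrite !andbF.
rewrite /greedy_path /= /greedy_arc /deviate eqxx.
case: (ltP (d y v) (d u v)) => yv; last by rewrite !andbF.
by rewrite HS // path_dev.
Qed.

Lemma reach (s : profile P) v : forall a,
  (forall a', a' != v -> d a v = d a a' + d a' v -> nx a' v \in s a') ->
  exists p, greedy_path d s a v p && (walk_length d a p == d a v).
Proof.
move=> a; have [n Hn] : exists n, (#|[set z | (d z v < d a v)%R]| <= n)%N by exists #|[set z | (d z v < d a v)%R]|.
elim: n a Hn => [|n IH] a Hn H.
  case: (eqVneq a v) => [->|nav].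
    by exists [::]; rewrite /greedy_path /= wl_nil d_xx !eqxx.
  exfalso; move: Hn; rewrite leqn0 => /eqP/cards0_eq/setP/(_ v); rewrite !inE d_xx.
  by rewrite (d_pos nav).
case: (eqVneq a v) => [->|nav].
  by exists [::]; rewrite /greedy_path /= wl_nil d_xx !eqxx.
set b := nx a v.
have Hab := N2 nav; rewrite -/b in Hab.
have Eab : E a b by apply: N1.
have nab : a != b by apply/eqP=> e; move: Eab; rewrite -e Eirr.
have dab := d_pos nab.
have bin : b \in s a by apply: H; rewrite // d_xx add0r.
have [p /andP[gp /eqP lp]] : exists p, greedy_path d s b v p && (walk_length d b p == d b v).
  apply: IH.
    rewrite -ltnS; apply: leq_trans Hn; apply: proper_card; apply/properP; split.
      apply/subsetP=> z; rewrite !inE => zb; apply: lt_trans zb _.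
      by rewrite Hab ltrDr.
    by exists b; rewrite !inE ?ltxx // Hab ltrDr.
  move=> a' na' Hb; apply: H => //.
  apply/eqP; rewrite eq_le tri /= Hab Hb; have := tri a b a'; lra.
exists (b :: p); rewrite /greedy_path /= /greedy_arc bin /= Hab ltrDr dab /=.
by move: gp => /andP[-> ->]; rewrite wl_cons lp -Hab eqxx.
Qed.

Lemma stretch_le1 Z (s : profile P) u v : u != v ->
  (forall a', a' != v -> d u v = d u a' + d a' v -> nx a' v \in s a') ->
  stretch d Z s u v <= 1.
Proof.
move=> nuv H; case: (reach H) => p /andP[gp /eqP lp].
by apply: le_trans (stretch_le Z gp) _; rewrite lp divff // gt_eqF // d_pos.
Qed.


Definition B u x := [set z | (z != u) && (nx u z == x)].

Lemma nx_neq u v : u != v -> nx u v != u.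
Proof. by move=> nuv; apply/eqP=> e; have := N1 nuv; rewrite e Eirr. Qed.

Lemma SB u y v : y != u -> v != u -> d y v < d u v -> nx u y = nx u v.
Proof.
move=> nyu nvu lt; apply/eqP; apply: contraLR lt => nh.
by rewrite -leNgt (N3 nyu nvu nh) lerDr d_ge0.
Qed.

Lemma betw u v a : a != u -> a != v -> d u v = d u a + d a v ->
  nx u a = nx u v /\ nx a u != nx a v.
Proof.
move=> nau nav H.
have nuv : v != u.
  apply/eqP=> e; move: H; rewrite e d_xx (d_sym a u) => H.
  by have := d_pos nau; move=> ?; rlra.
split.
  apply/eqP; apply/negP=> /negP nh.
  have := N3 nau nuv nh; rewrite H (d_sym a u) => e.
  by have := d_pos nau; move=> ?; rlra.
apply/negP=> /eqP e.
have Hu := N2 nau; have Hv := N2 nav; rewrite e in Hu.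
have H1 := tri u (nx a v) v.
have S1 := d_sym (nx a v) u; have S2 := d_sym a u.
have H2 := d_pos (nx_neq nav); rewrite d_sym in H2.
rlra.
Qed.

Lemma B_sub u v a : a != u -> a != v -> d u v = d u a + d a v ->
  B a (nx a v) \proper B u (nx u v).
Proof.
move=> nau nav H; case: (betw nau nav H) => h1 h2.
apply/properP; split; last first.
  by exists a; rewrite !inE ?eqxx // nau h1 eqxx.
apply/subsetP=> z; rewrite !inE => /andP[nza /eqP za].
have nzu : z != u by apply/eqP=> e; rewrite -e za eqxx in h2.
have nh : nx a u != nx a z by rewrite za.
have nua : u != a by rewrite eq_sym.
have e1 := N3 nua nza nh.
rewrite nzu /= -h1 eq_sym; apply/negPn/negP => nh2.
have e2 := N3 nau nzu nh2.
have hp := d_pos nau; rewrite e1 in e2; rewrite (d_sym a u) in e2.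
rlra.
Qed.


Lemma sum_cmp (F G : P -> R) u x : x != u -> (forall v, v != u -> F v <= G v) ->
  \sum_(v | v != u) F v - \sum_(v | v != u) G v <= F x - G x.
Proof.
move=> xu H; rewrite (bigD1 x) //= (bigD1 x (P := fun v => v != u)) //=.
have : \sum_(v | (v != u) && (v != x)) F v <= \sum_(v | (v != u) && (v != x)) G v.
  by apply: ler_sum => v /andP[vu _]; apply: H.
move=> ?; lra.
Qed.

Lemma cost_dev Z alpha (s : profile P) u S :
  cost d Z alpha (deviate s u S) u =
  \sum_(v | v != u) stretch d Z (deviate s u S) u v + alpha * #|S|%:R.
Proof. by rewrite /cost /deviate eqxx. Qed.

Section Eq.
Variables (Z alpha : R).
Hypotheses (apos : 0 < alpha) (Z1 : 1 < Z) (Za : 1 + alpha < Z).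

Lemma no_missing (s : profile P) : greedy_equilibrium d Z alpha s ->
  forall u x, E u x -> x \in s u.
Proof.
move=> GE.
suff H: forall n u x, (#|B u x| < n)%N -> E u x -> x \in s u.
  by move=> u x; apply: (H #|B u x|.+1).
elim=> [|n IH] u x //.
move=> Hn Eux; apply/negPn/negP => xn.
have nxu : x != u by apply/eqP=> e; move: Eux; rewrite e Eirr.
have nux : u != x by rewrite eq_sym.
have xB : x \in B u x by rewrite inE nxu N4 ?eqxx.
have ge1 : forall v, v != u -> 1 <= stretch d Z s u v.
  by move=> v vu; apply: stretch_ge1; rewrite ?ltW // eq_sym.
have reachS : forall S : {set P}, x \in S -> forall v, v \in B u x ->
    stretch d Z (deviate s u S) u v <= 1.
  move=> S xS v; rewrite inE => /andP[nvu /eqP hv].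
  apply: stretch_le1; first by rewrite eq_sym.
  move=> a' na' Ha'; rewrite /deviate; case: eqP => [->|/eqP nau]; first by rewrite hv.
  apply: IH; last exact: N1.
  have := proper_card (B_sub nau na' Ha'); rewrite hv => lt.
  by apply: leq_trans lt _; rewrite -ltnS.
have le_all : forall S : {set P}, x \in S -> (forall y, y \notin B u x -> (y \in S) = (y \in s u)) ->
    forall v, v != u -> stretch d Z (deviate s u S) u v <= stretch d Z s u v.
  move=> S xS HS v nvu; case: (boolP (v \in B u x)) => vB.
    by apply: le_trans (reachS S xS v vB) (ge1 v nvu).
  rewrite le_eqVlt; apply/orP; left; apply/eqP.
  apply: stretch_eq => p; apply: gp_dev => y yv.
  have nyu : y != u by apply/eqP=> e; rewrite e ltxx in yv.
  apply: HS; move: vB; rewrite !inE nvu nyu /= (SB nyu nvu yv) //.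
have stx_le : forall S : {set P}, x \in S -> stretch d Z (deviate s u S) u x <= 1 by move=> S xS; apply: reachS.
case: (boolP [exists y, (y \in s u) && (y \in B u x)]).
  case/existsP=> y /andP[ys yB].
  set S := x |: (s u :\ y).
  apply: (GE u S); first by right; right; exists y, x; split.
  have xS : x \in S by rewrite /S setU11.
  have HS : forall z, z \notin B u x -> (z \in S) = (z \in s u).
    move=> z zB; rewrite /S in_setU1 in_setD1.
    have -> : (z == x) = false by apply/negbTE; apply: contraNneq zB => ->.
    have -> : (z != y) = true by apply: contraNneq zB => ->.
    by [].
  have cS : #|S| = #|s u|.
    rewrite /S cardsU1 in_setD1 (negPf xn) andbF /=.
    by rewrite [RHS](cardsD1 y) ys.
  have gt1 : 1 < stretch d Z s u x.
    apply: stretch_gt1 => //; case=> [|y' p] gp.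
      by move: gp; rewrite /greedy_path /= (negPf nux).
    case: (gp_cons gp) => y's y'x gp'.
    have ny'u : y' != u by apply/eqP=> e; rewrite e ltxx in y'x.
    have ny'x : y' != x by apply/eqP=> e; rewrite e in y's; rewrite y's in xn.
    have h := SB ny'u nxu y'x; rewrite (N4 Eux) in h.
    have nuy' : u != y' by rewrite eq_sym.
    have nxy' : x != y' by rewrite eq_sym.
    have e := N2 nuy'.
    rewrite h in e.
    have := gp_len gp'; have := d_pos nxy'.
    rewrite wl_cons e => ? ?; have := d_ge0 y' x; move=> ?; rlra.
  have hsum := sum_cmp (F := fun v => stretch d Z (deviate s u S) u v) (G := fun v => stretch d Z s u v) nxu (le_all S xS HS).
  have := stx_le S xS; rewrite cost_dev /cost cS /=; move: hsum => /= ? ?; rlra.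
move=> noy.
set S := x |: s u.
apply: (GE u S); first by left; exists x; split.
have xS : x \in S by rewrite /S setU11.
have HS : forall z, z \notin B u x -> (z \in S) = (z \in s u).
  move=> z zB; rewrite /S in_setU1.
  have -> : (z == x) = false by apply/negbTE; apply: contraNneq zB => ->.
  by [].
have cS : #|S| = (#|s u| + 1)%N by rewrite /S cardsU1 xn addnC.
have stZ : stretch d Z s u x = Z.
  apply: stretch_Z; case=> [|y' p]; first by rewrite /greedy_path /= (negPf nux).
  apply/negP=> gp; case: (gp_cons gp) => y's y'x gp'.
  have ny'u : y' != u by apply/eqP=> e; rewrite e ltxx in y'x.
  have h := SB ny'u nxu y'x; rewrite (N4 Eux) in h.
  move/existsP: noy; apply; exists y'; rewrite y's inE ny'u h eqxx.
  by [].
have hsum := sum_cmp (F := fun v => stretch d Z (deviate s u S) u v) (G := fun v => stretch d Z s u v) nxu (le_all S xS HS).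
have := stx_le S xS; move: hsum; rewrite /= stZ cost_dev /cost cS natrD mulrDr mulr1 /= => h1 h2; have Za2 := Za; rlra.
Qed.


Lemma no_extra (s : profile P) : greedy_equilibrium d Z alpha s ->
  forall u y, y \in s u -> E u y.
Proof.
move=> GE u y ys; apply/negPn/negP => nE.
have NM := no_missing GE.
set S := s u :\ y.
apply: (GE u S); first by right; left; exists y.
have cS : (#|S| + 1)%N = #|s u| by rewrite /S [RHS](cardsD1 y) ys addnC.
have le_all : forall v, v != u -> stretch d Z (deviate s u S) u v <= stretch d Z s u v.
  move=> v vu.
  have g1 : 1 <= stretch d Z s u v by apply: stretch_ge1; rewrite ?ltW // eq_sym.
  apply: le_trans g1; apply: stretch_le1; first by rewrite eq_sym.
  move=> a' na' _; rewrite /deviate; case: eqP => [->|_]; last by apply: NM; apply: N1.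
  have uv : u != v by rewrite eq_sym.
  rewrite /S in_setD1 (NM _ _ (N1 uv)) andbT.
  by apply: contraNneq nE => <-; apply: N1.
have hs : \sum_(v | v != u) stretch d Z (deviate s u S) u v <= \sum_(v | v != u) stretch d Z s u v.
  by apply: ler_sum.
rewrite cost_dev /cost -cS natrD mulrDr mulr1 /=.
have ap := apos; rlra.
Qed.

Lemma GE_tree (s : profile P) : greedy_equilibrium d Z alpha s ->
  forall u, s u = tree_profile E u.
Proof.
move=> GE u; apply/setP => z; rewrite /tree_profile inE.
apply/idP/idP; [exact: no_extra | exact: no_missing].
Qed.

End Eq.

Lemma NE_GE Z alpha (s : profile P) : valid_profile s ->
  nash_equilibrium d Z alpha s -> greedy_equilibrium d Z alpha s.
Proof.
move=> V N u S' mv; apply: N.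
case: mv => [[v [vn vu ->]]|[[v [vs ->]]|[x [y [xs yn yu ->]]]]].
- by rewrite in_setU1 negb_or eq_sym vu V.
- by rewrite in_setD1 negb_and V orbT.
- by rewrite in_setU1 negb_or eq_sym yu in_setD1 negb_and V orbT.
Qed.

Lemma sum1_le (u : P) : \sum_(v | v != u) (1 : R) <= #|P|%:R.
Proof.
rewrite -sumr_const; apply: le_trans (_ : \sum_(v | v != u) (1:R) <= \sum_(v : P) 1) _.
  rewrite [X in _ <= X](bigID (fun v => v != u)) /= lerDl.
  by apply: sumr_ge0.
by rewrite sumr_const.
Qed.

Lemma tree_NE Z alpha (s : profile P) : 0 < alpha -> #|P|%:R + alpha * #|P|%:R + 2 <= Z ->
  (forall u, s u = tree_profile E u) -> nash_equilibrium d Z alpha s.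
Proof.
move=> apos HZ Hs u S' uS'.
have aP : 0 <= alpha * #|P|%:R by apply: mulr_ge0; [exact: ltW | exact: ler0n].
have nP : 0 <= #|P|%:R :> R by rewrite ler0n.
have Z1 : 1 <= Z by rlra.
have st1 : forall v, v != u -> stretch d Z s u v = 1.
  move=> v vu; apply/eqP; rewrite eq_le stretch_ge1 // ?andbT 1?eq_sym //.
  apply: stretch_le1; first by rewrite eq_sym.
  by move=> a' na' _; rewrite Hs /tree_profile inE N1.
have ge1' : forall v, v != u -> 1 <= stretch d Z (deviate s u S') u v.
  by move=> v vu; apply: stretch_ge1; rewrite // eq_sym.
have costE : cost d Z alpha s u = \sum_(v | v != u) (1:R) + alpha * #|s u|%:R.
  by rewrite /cost (eq_bigr (fun _ => 1)).
apply/negP; rewrite -leNgt costE cost_dev.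
case: (boolP [forall x, E u x ==> [exists y in S', nx u y == x]]) => [/forallP Hall|].
  apply: lerD; first by apply: ler_sum.
  apply: ler_wpM2l; first exact: ltW.
  rewrite ler_nat.
  apply: leq_trans (leq_imset_card (nx u) S').
  apply: subset_leq_card; apply/subsetP => z; rewrite Hs /tree_profile inE => Euz.
  move: (Hall z); rewrite Euz /= => /existsP [y /andP[yS /eqP <-]].
  by apply: imset_f.
rewrite negb_forall => /existsP [x]; rewrite negb_imply => /andP[Eux noy].
have nux : u != x by apply/eqP=> e; move: Eux; rewrite e Eirr.
have stZ : stretch d Z (deviate s u S') u x = Z.
  apply: stretch_Z; case=> [|y' p]; first by rewrite /greedy_path /= (negPf nux).
  apply/negP=> gp; case: (gp_cons gp) => y's y'x gp'.
  have ny'u : y' != u by apply/eqP=> e; rewrite e ltxx in y'x.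
  have xu' : x != u by rewrite eq_sym.
  have h := SB ny'u xu' y'x.
  rewrite (N4 Eux) in h.
  move: y's; rewrite /deviate eqxx => y's.
  by move/existsP: noy; apply; exists y'; rewrite y's h eqxx.
have xu : x != u by rewrite eq_sym.
have sumge : Z <= \sum_(v | v != u) stretch d Z (deviate s u S') u v.
  rewrite (bigD1 x) //= stZ lerDl; apply: sumr_ge0 => v /andP[vu _].
  by apply: le_trans (ge1' v vu).
have h1 := sum1_le u.
have h2 : alpha * #|s u|%:R <= alpha * #|P|%:R by apply: ler_wpM2l; [exact: ltW | rewrite ler_nat max_card].
have h3 : 0 <= alpha * #|S'|%:R by apply: mulr_ge0; [exact: ltW | exact: ler0n].
rlra.
Qed.
End Tree.

Unset Implicit Arguments.

Theorem theorem3p4 (R : realFieldType) (P : finType) (E : rel P)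
    (w d : P -> P -> R) (alpha : R) :
  is_tree_metric E w d -> 0 < alpha ->
  exists Z0 : R, forall Z : R, Z0 <= Z ->
    forall s : profile P, valid_profile s ->
      (greedy_equilibrium d Z alpha s <-> (forall u, s u = tree_profile E u)) /\
      (nash_equilibrium d Z alpha s <-> (forall u, s u = tree_profile E u)).
Proof.
case=> [[Eirr [Esym Euniq]] [wpos [wsym dpath]]] apos.
exists (#|P|%:R + alpha * #|P|%:R + 2) => Z HZ s V.
have GT : greedy_equilibrium d Z alpha s -> forall u, s u = tree_profile E u.
  move=> G u.
  have cP : (1 <= #|P|)%N by rewrite -cardsT (cardsD1 u) in_setT.
  have h1 : alpha <= alpha * #|P|%:R.
    by rewrite -{1}(mulr1 alpha); apply: ler_wpM2l; [exact: ltW | rewrite ler1n].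
  have h2 : 1 <= #|P|%:R :> R by rewrite ler1n.
  have Z1 : 1 < Z by rlra.
  have Za : 1 + alpha < Z by rlra.
  exact: (GE_tree Eirr Esym Euniq wpos wsym dpath apos Z1 Za G).
have TN : (forall u, s u = tree_profile E u) -> nash_equilibrium d Z alpha s.
  exact: (tree_NE Eirr Esym Euniq wpos dpath apos HZ).
split; split => //.
- by move=> Hs; apply: NE_GE V (TN Hs).
- by move=> N; apply: GT; apply: NE_GE V N.
Qed.
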